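(* Let $\psi:L\to\mathcal{H}_3(\mathbb{Z})$, $L\subseteq S^*$, be a Cayley automatic representation of the Heisenberg group, and let $L_H,L_{H_1},w_0,R_\varphi,R_{p_1},R_{p_2}$ be as in the context. Assume there exist FA-recognizable relations $R_0,R_1,R_2\subseteq S^*\times S^*$ such that $L_H\triangleleft R_0=R_\varphi$, $R_1\triangleright L_{H_1}=R_{p_1}$, $L_H\triangleleft R_2=R_{p_2}$, and $R_2\triangleright\{w_0\}=R_{p_2}\triangleright\{w_0\}$. Then the function $h(n)=\max\{d_A(\pi(w),\psi(w)) : w\in L,|w|\le n\}$ satisfies $\mathfrak{e}\preceq h$. In particular, $h\not\preceq f$ for every $f\in\mathfrak{F}$ with $f\prec\mathfrak{e}$.
   Context: $\mathcal{H}_3(\mathbb{Z})$ is the group of integer matrices $\begin{pmatrix}1&x&z\\0&1&y\\0&0&1\end{pmatrix}$, identified with triples $(x,y,z)\in\mathbb{Z}^3$. Let $s,p,q$ be the elements $(1,0,0),(0,1,0),(0,0,1)$; for $g=(x,y,z)$, $gs=(x+1,y,z)$, $gp=(x,y+1,x+z)$, $gq=(x,y,z+1)$. Let $A=\{e,s,p,q\}$, $S=A\cup A^{-1}$, $\pi:S^*\to\mathcal{H}_3(\mathbb{Z})$ the evaluation map, $d_A$ the word metric. $H=\{(x,0,z)\}\cong\mathbb{Z}^2$ is the subgroup generated by $s,q$, written as column vectors $[x;z]$. Endomorphisms of $H$: $\varphi([x;z])=[x;x+z]$ (matrix $\begin{pmatrix}1&0\\1&1\end{pmatrix}$), $p_1([x;z])=[x;0]$,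 $p_2([x;z])=[0;z]$. $H_1=p_1(H)=\langle s\rangle$, $H_2=p_2(H)=\langle q\rangle$. A Cayley automatic representation is a bijection $\psi:L\to G$ from a regular $L\subseteq S^*$ such that for each $a\in A$ the relation $\{(\psi^{-1}(g),\psi^{-1}(ga))\}$ is FA-recognizable, where a relation is FA-recognizable if the language of convolutions (parallel readings of the strings with shorter ones padded by a new symbol $\diamond$) is regular. Set $L_H=\psi^{-1}(H)$, $L_{H_1}=\psi^{-1}(H_1)$, $L_{H_2}=\psi^{-1}(H_2)$, $w_0=\psi^{-1}(e)$, and for $\theta\in\{\varphi,p_1,p_2\}$, $R_\theta=\{(w,\psi^{-1}(\theta(\psi(w)))) : w\in L_H\}$. For $R\subseteq S^*\times S^*$ and $X\subseteq S^*$: $X\triangleleft R=\{(u,v)\in R: u\in X\}$ and $R\triangleright X=\{(u,v)\in R: v\in X\}$. $\mathfrak{e}(n)=\exp(n)$. $\mathfrak{F}$ is the set of nondecreasing functions from some interval $[Q,\infty)\cap\mathbb{N}$ to the nonnegative reals; $g\preceq f$ means there exist $N\ge0$ and positive integers $K,M$ with $g(n)\le Kf(Mn)$ for all $n\ge N$; $g\prec f$ means $g\preceq f$ but not $f\preceq g$. *)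

(* Defs.v *)
From HB Require Import structures.
From mathcomp Require Import all_boot.
From Stdlib Require Import ZArith Reals Lia.

Set Implicit Arguments.
Unset Strict Implicit.
Unset Printing Implicit Defensive.

Inductive letter := Le | Ls | Lp | Lq | Lsi | Lpi | Lqi.

Definition letter_to (a : letter) : 'I_7 :=
  inord (match a with Le => 0 | Ls => 1 | Lp => 2 | Lq => 3
                    | Lsi => 4 | Lpi => 5 | Lqi => 6 end).
Definition letter_of (i : 'I_7) : letter :=
  match val i with 0 => Le | 1 => Ls | 2 => Lp | 3 => Lq
                 | 4 => Lsi | 5 => Lpi | _ => Lqi end.
Lemma letter_toK : cancel letter_to letter_of.
Proof. by case; rewrite /letter_of /letter_to /= inordK. Qed.

HB.instance Definition _ := Equality.copy letter (can_type letter_toK).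
HB.instance Definition _ := Choice.copy letter (can_type letter_toK).
HB.instance Definition _ := Countable.copy letter (can_type letter_toK).
HB.instance Definition _ := Finite.copy letter (can_type letter_toK).

Definition isA (a : letter) : bool :=
  match a with Le | Ls | Lp | Lq => true | _ => false end.

Record dfa (T : Type) := DFA {
  dfa_state : finType;
  dfa_s0 : dfa_state;
  dfa_fin : pred dfa_state;
  dfa_step : dfa_state -> T -> dfa_state }.

Definition dfa_accept (T : Type) (D : dfa T) (w : seq T) : bool :=
  @dfa_fin T D (foldl (@dfa_step T D) (@dfa_s0 T D) w).

Definition regular (T : Type) (L : seq T -> Prop) : Prop :=
  exists D : dfa T, forall w, L w <-> dfa_accept D w.

(* convolution; None plays the role of the padding symbol ⋄ *)
Definition conv (u v : seq letter) : seq (option letter * option letter) :=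
  mkseq (fun i => (nth None (map Some u) i, nth None (map Some v) i))
        (maxn (size u) (size v)).

Definition FA_rec (R : seq letter -> seq letter -> Prop) : Prop :=
  regular (fun w => exists u v, R u v /\ w = conv u v).

Record H3 := mkH { hx : Z; hy : Z; hz : Z }.

Definition hone : H3 := mkH 0 0 0.
Definition hmul (g h : H3) : H3 :=
  mkH (hx g + hx h)%Z (hy g + hy h)%Z (hz g + hz h + hx g * hy h)%Z.
Definition hinv (g : H3) : H3 :=
  mkH (- hx g)%Z (- hy g)%Z (- hz g + hx g * hy g)%Z.

Definition letter_val (a : letter) : H3 :=
  match a with
  | Le => hone
  | Ls => mkH 1 0 0 | Lp => mkH 0 1 0 | Lq => mkH 0 0 1
  | Lsi => hinv (mkH 1 0 0) | Lpi => hinv (mkH 0 1 0) | Lqi => hinv (mkH 0 0 1)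
  end.

Definition pi (w : seq letter) : H3 := foldl (fun g a => hmul g (letter_val a)) hone w.

Definition heqb (g h : H3) : bool :=
  [&& Z.eqb (hx g) (hx h), Z.eqb (hy g) (hy h) & Z.eqb (hz g) (hz h)].

Definition reach_len (g : H3) (n : nat) : bool :=
  [exists t : n.-tuple letter, heqb (pi t) g].

Lemma hmul_assoc (a b c : H3) : hmul a (hmul b c) = hmul (hmul a b) c.
Proof. destruct a, b, c; unfold hmul; simpl; f_equal; lia. Qed.

Lemma hmul1 (g : H3) : hmul g hone = g.
Proof. destruct g; unfold hmul; simpl; f_equal; lia. Qed.

Lemma foldl_pi (g : H3) (v : seq letter) :
  foldl (fun g a => hmul g (letter_val a)) g v = hmul g (pi v).
Proof.
  rewrite /pi; elim: v g => [|a v IH] g /=; first by rewrite hmul1.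
  rewrite IH [in RHS]IH -hmul_assoc; congr hmul.
  by case: a; destruct g; rewrite /hmul /=; f_equal; lia.
Qed.

Lemma pi_cat (u v : seq letter) : pi (u ++ v) = hmul (pi u) (pi v).
Proof. by rewrite {1}/pi foldl_cat foldl_pi. Qed.

Definition zpow (a ai : letter) (k : Z) : seq letter :=
  if (0 <=? k)%Z then nseq (Z.to_nat k) a else nseq (Z.to_nat (- k)) ai.

Lemma pi_zpow_s k : pi (zpow Ls Lsi k) = mkH k 0 0.
Proof.
  rewrite /zpow; case: (Z.leb_spec 0 k) => Hk.
  - rewrite -{2}(Z2Nat.id k Hk); elim: (Z.to_nat k) => [|n IH] //.
    change (nseq n.+1 ?a) with ([:: a] ++ nseq n a); rewrite pi_cat IH Nat2Z.inj_succ /pi /hmul /hinv; cbn -[Z.add Z.mul Z.opp Z.of_nat]; f_equal; lia.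
  - have Hk' : (k = - Z.of_nat (Z.to_nat (- k)))%Z by lia.
    rewrite {2}Hk'; elim: (Z.to_nat (- k)) => [|n IH] //.
    change (nseq n.+1 ?a) with ([:: a] ++ nseq n a); rewrite pi_cat IH Nat2Z.inj_succ /pi /hmul /hinv; cbn -[Z.add Z.mul Z.opp Z.of_nat]; f_equal; lia.
Qed.

Lemma pi_zpow_p k : pi (zpow Lp Lpi k) = mkH 0 k 0.
Proof.
  rewrite /zpow; case: (Z.leb_spec 0 k) => Hk.
  - rewrite -{2}(Z2Nat.id k Hk); elim: (Z.to_nat k) => [|n IH] //.
    change (nseq n.+1 ?a) with ([:: a] ++ nseq n a); rewrite pi_cat IH Nat2Z.inj_succ /pi /hmul /hinv; cbn -[Z.add Z.mul Z.opp Z.of_nat]; f_equal; lia.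
  - have Hk' : (k = - Z.of_nat (Z.to_nat (- k)))%Z by lia.
    rewrite {2}Hk'; elim: (Z.to_nat (- k)) => [|n IH] //.
    change (nseq n.+1 ?a) with ([:: a] ++ nseq n a); rewrite pi_cat IH Nat2Z.inj_succ /pi /hmul /hinv; cbn -[Z.add Z.mul Z.opp Z.of_nat]; f_equal; lia.
Qed.

Lemma pi_zpow_q k : pi (zpow Lq Lqi k) = mkH 0 0 k.
Proof.
  rewrite /zpow; case: (Z.leb_spec 0 k) => Hk.
  - rewrite -{2}(Z2Nat.id k Hk); elim: (Z.to_nat k) => [|n IH] //.
    change (nseq n.+1 ?a) with ([:: a] ++ nseq n a); rewrite pi_cat IH Nat2Z.inj_succ /pi /hmul /hinv; cbn -[Z.add Z.mul Z.opp Z.of_nat]; f_equal; lia.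
  - have Hk' : (k = - Z.of_nat (Z.to_nat (- k)))%Z by lia.
    rewrite {2}Hk'; elim: (Z.to_nat (- k)) => [|n IH] //.
    change (nseq n.+1 ?a) with ([:: a] ++ nseq n a); rewrite pi_cat IH Nat2Z.inj_succ /pi /hmul /hinv; cbn -[Z.add Z.mul Z.opp Z.of_nat]; f_equal; lia.
Qed.

Lemma reach_exists (g : H3) : exists n, reach_len g n.
Proof.
  case: g => x y z.
  set w := zpow Ls Lsi x ++ zpow Lp Lpi y ++ zpow Lq Lqi (z - x * y)%Z.
  exists (size w); apply/existsP; exists (in_tuple w) => /=.
  rewrite /w !pi_cat pi_zpow_s pi_zpow_p pi_zpow_q /heqb /hmul /=.
  apply/and3P; split; apply/Z.eqb_eq; lia.
Qed.

Definition wlen (g : H3) : nat := ex_minn (reach_exists g).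
Definition dA (g h : H3) : nat := wlen (hmul (hinv g) h).

(* L is a (decidable) language, psi : S^* -> H_3(Z) is only relevant on L. *)
Definition cayley_automatic (L : pred (seq letter)) (psi : seq letter -> H3) : Prop :=
  regular (fun w => L w)
  /\ (forall u v, L u -> L v -> psi u = psi v -> u = v)
  /\ (forall g, exists w, L w /\ psi w = g)
  /\ (forall a, isA a ->
        FA_rec (fun u v => L u /\ L v /\ psi v = hmul (psi u) (letter_val a))).

Definition inH (g : H3) : bool := Z.eqb (hy g) 0.
Definition inH1 (g : H3) : bool := Z.eqb (hy g) 0 && Z.eqb (hz g) 0.

(* endomorphisms of H, written on triples (x,0,z) *)
Definition phiH (g : H3) : H3 := mkH (hx g) 0 (hx g + hz g)%Z.
Definition p1H (g : H3) : H3 := mkH (hx g) 0 0.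
Definition p2H (g : H3) : H3 := mkH 0 0 (hz g).

Section Rep.
Variables (L : pred (seq letter)) (psi : seq letter -> H3).
Definition L_H (w : seq letter) : Prop := L w /\ inH (psi w).
Definition L_H1 (w : seq letter) : Prop := L w /\ inH1 (psi w).
Definition is_w0 (w : seq letter) : Prop := L w /\ psi w = hone.
Definition R_theta (theta : H3 -> H3) (u v : seq letter) : Prop :=
  L_H u /\ L v /\ psi v = theta (psi u).
(* h(n) = max{ d_A(pi(w), psi(w)) : w in L, |w| <= n }  (0 if no such w) *)
Definition hfun (n : nat) : nat :=
  \max_(k < n.+1) \max_(t : k.-tuple letter | L (tval t)) dA (pi t) (psi t).
End Rep.

Definition restrL (X : seq letter -> Prop) (R : seq letter -> seq letter -> Prop) u v :=
  X u /\ R u v.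
Definition restrR (R : seq letter -> seq letter -> Prop) (X : seq letter -> Prop) u v :=
  R u v /\ X v.

Definition preceq (g f : nat -> R) : Prop :=
  exists (N K M : nat), 0 < K /\ 0 < M /\
    forall n, N <= n -> Rle (g n) (Rmult (INR K) (f (M * n))).
Definition prec (g f : nat -> R) : Prop := preceq g f /\ ~ preceq f g.

(* the class 𝔉 (functions given on [Q,∞)∩N; values below Q are irrelevant) *)
Definition inFF (f : nat -> R) : Prop :=
  exists Q : nat, (forall n, Q <= n -> Rle 0 (f n))
                  /\ (forall m n, Q <= m -> m <= n -> Rle (f m) (f n)).

Definition expf (n : nat) : R := exp (INR n).

(* Main.v *)
Require Import Defs.
From Stdlib Require Import ZArith Reals Lia Lra.
From mathcomp Require Import all_boot zify.

Set Implicit Arguments.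
Unset Strict Implicit.

Definition cut (T : Type) (i j : nat) (x : seq T) := take i x ++ drop j x.

Lemma nth_cut (T : Type) (d : T) i j (s : seq T) k : i <= j ->
  nth d (cut i j s) k = if k < i then nth d s k else nth d s (k - i + j).
Proof.
move=> hij; rewrite /cut nth_cat size_take_min.
case: (leqP i (size s)) => hs.
- case: ifP => hk; first by rewrite nth_take.
  by rewrite nth_drop; congr nth; lia.
-   rewrite (drop_oversize (s:=s) (n:=j)); last by lia.
  case: (ltnP k (size s)) => hk.
  + have -> : k < i by lia. by rewrite nth_take //; lia.
  + rewrite nth_nil; case: ifP => _; rewrite nth_default //; lia.
Qed.

Lemma size_cut (T : Type) i j (s : seq T) :
  size (cut i j s) = minn i (size s) + (size s - j).
Proof. by rewrite /cut size_cat size_take_min size_drop. Qed.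

Lemma cut_id (T : Type) i j (s : seq T) : i <= j -> size s <= i -> cut i j s = s.
Proof. move=> h1 h2; rewrite /cut take_oversize // drop_oversize ?cats0 //; lia. Qed.

Lemma cut_size_eq (T : Type) i j (s : seq T) : i < j -> size (cut i j s) = size s -> size s <= i.
Proof. rewrite size_cut; lia. Qed.

Definition conv2 := conv.

Lemma nth_conv u v k :
  nth (None, None) (conv u v) k = (nth None (map Some u) k, nth None (map Some v) k).
Proof.
rewrite /conv; case: (ltnP k (maxn (size u) (size v))) => h.
  by rewrite nth_mkseq.
rewrite nth_default ?size_mkseq // !nth_default // size_map; lia.
Qed.

Lemma size_conv u v : size (conv u v) = maxn (size u) (size v).
Proof. by rewrite size_mkseq. Qed.

Lemma nth_Some_none (u : seq letter) k : (nth None (map Some u) k == None) = (size u <= k).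
Proof.
case: (ltnP k (size u)) => h.
  by rewrite (nth_map Ls) //.
by rewrite nth_default // size_map.
Qed.

Lemma conv_inj u v u' v' : conv u v = conv u' v' -> u = u' /\ v = v'.
Proof.
move=> E.
have Hn : forall k, nth None (map Some u) k = nth None (map Some u') k /\
                    nth None (map Some v) k = nth None (map Some v') k.
  move=> k; have := nth_conv u v k; rewrite E nth_conv => -[-> ->]; by [].
have sz : forall (a b : seq letter), (forall k, nth None (map Some a) k = nth None (map Some b) k) -> a = b.
  move=> a b H.
  have hs : size a = size b.
    apply/eqP; rewrite eqn_leq; apply/andP; split.
    - by rewrite -nth_Some_none H nth_Some_none.
    - by rewrite -nth_Some_none -H nth_Some_none.
  apply: (@inj_map _ _ (@Some letter)); first by move=> ? ? [].
   apply: (eq_from_nth (x0:=None)); first by rewrite !size_map.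
  by move=> k _; apply: H.
split; apply: sz => k; by case: (Hn k).
Qed.

Lemma conv_cut i j u v : i <= j ->
  conv (cut i j u) (cut i j v) = cut i j (conv u v).
Proof.
move=> hij; apply: (eq_from_nth (x0:=(None,None))).
  rewrite size_conv !size_cut size_conv; lia.
have mc : forall x : seq letter, map Some (cut i j x) = cut i j (map Some x).
  by move=> x; rewrite /cut map_cat map_take map_drop.
move=> k _; rewrite nth_conv !mc !nth_cut //.
by case: ifP => _; rewrite nth_conv.
Qed.

Definition acc (D : dfa (option letter * option letter)) u v := dfa_accept D (conv u v).
Definition stp (D : dfa (option letter * option letter)) u v k :=
  foldl (@dfa_step _ D) (@dfa_s0 _ D) (take k (conv u v)).

Lemma acc_cut D u v i j : i <= j -> stp D u v i = stp D u v j ->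
  acc D u v -> acc D (cut i j u) (cut i j v).
Proof.
move=> hij E; rewrite /acc /dfa_accept conv_cut // /cut foldl_cat.
rewrite -/(stp D u v i) E /stp -foldl_cat cat_take_drop; by [].
Qed.

Lemma pump3 (D1 D2 D3 : dfa (option letter * option letter)) u1 v1 u2 v2 u3 v3 P M :
  acc D1 u1 v1 -> acc D2 u2 v2 -> acc D3 u3 v3 ->
  P + #|{: (dfa_state D1 * dfa_state D2 * dfa_state D3)%type}| <= M ->
  exists i j, P <= i /\ i < j /\ j <= M /\
    acc D1 (cut i j u1) (cut i j v1) /\ acc D2 (cut i j u2) (cut i j v2) /\
    acc D3 (cut i j u3) (cut i j v3).
Proof.
set N := #|_| => a1 a2 a3 hM.
pose f (k : 'I_N.+1) : (dfa_state D1 * dfa_state D2 * dfa_state D3)%type :=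
  (stp D1 u1 v1 (P + k), stp D2 u2 v2 (P + k), stp D3 u3 v3 (P + k)).
have : ~~ injectiveb f.
  apply/negP => /injectiveP inj; have := leq_card f inj.
  by rewrite card_ord -/N ltnn.
move=> /injectivePn [x [y hxy E]].
have gen : forall x y : 'I_N.+1, x < y -> f x = f y -> exists i j, P <= i /\ i < j /\ j <= M /\
    acc D1 (cut i j u1) (cut i j v1) /\ acc D2 (cut i j u2) (cut i j v2) /\
    acc D3 (cut i j u3) (cut i j v3).
  move=> x' y' hl E'; exists (P + x'), (P + y').
  rewrite /f in E'; case: E' => e1 e2 e3.
  have hy := ltn_ord y'.
  do 3 (split; first lia). split; last split; apply: acc_cut => //; lia.
case: (ltngtP x y) => h.
- exact: gen h E.
- exact: gen h (esym E).
- by move: hxy; rewrite (val_inj h) eqxx.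
Qed.

Lemma FA_acc R : FA_rec R -> exists D, forall u v, R u v <-> acc D u v.
Proof.
move=> [D HD]; exists D => u v; split.
- by move=> r; apply/HD; exists u, v.
- move=> /HD [u' [v' [r E]]]; by case: (conv_inj E) => -> ->.
Qed.

Lemma bound_fwd (L : pred (seq letter)) (psi : seq letter -> H3) R theta :
  (forall u v, L u -> L v -> psi u = psi v -> u = v) ->
  FA_rec R ->
  (forall u v, restrL (L_H L psi) R u v <-> R_theta L psi theta u v) ->
  exists N, forall a t, R_theta L psi theta a t -> size t < size a + N.
Proof.
move=> inj /FA_acc [D HD] HR.
exists #|{: (dfa_state D * dfa_state D * dfa_state D)%type}| => a t RT.
rewrite ltnNge; apply/negP => hle.
have ac : acc D a t by apply/HD; case: (HR a t) => _ /(_ RT) [].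
have [i [j [hi [hij [hj [c _]]]]]] :=
  pump3 ac ac ac (P := size a) (M := maxn (size a) (size t)) ltac:(lia).
rewrite (@cut_id _ i j a (ltnW hij)) in c; last by lia.
have RT' : R_theta L psi theta a (cut i j t).
  apply/HR; split; first by case: RT.
  by apply/HD.
have E : cut i j t = t.
  case: RT' => _ [Lt' e']; case: RT => _ [Lt e].
  by apply: inj => //; rewrite e e'.
have := @cut_size_eq _ i j t hij; rewrite E => /(_ erefl); lia.
Qed.

Lemma bound_transfer (L : pred (seq letter)) (psi : seq letter -> H3) R0 R2 w0 :
  (forall u v, L u -> L v -> psi u = psi v -> u = v) ->
  FA_rec R0 -> FA_rec R2 ->
  (forall u v, restrL (L_H L psi) R0 u v <-> R_theta L psi phiH u v) ->
  (forall u v, restrL (L_H L psi) R2 u v <-> R_theta L psi p2H u v) ->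
  (forall u v, restrR R2 (is_w0 L psi) u v <-> restrR (R_theta L psi p2H) (is_w0 L psi) u v) ->
  is_w0 L psi w0 ->
  exists N, forall a t b, L b -> hx (psi b) = 0%Z -> hy (psi b) = 0%Z ->
    L a -> psi a = mkH (hz (psi b)) 0 0 -> L t -> psi t = phiH (psi a) ->
    size a < maxn (size b) (size w0) + N.
Proof.
move=> inj /FA_acc [D0 HD0] /FA_acc [D2 HD2] H0 H2 H3 W0.
exists #|{: (dfa_state D0 * dfa_state D2 * dfa_state D2)%type}|.
move=> a t b Lb hxb hyb La pa Lt pt.
rewrite ltnNge; apply/negP => hle.
have LHa : L_H L psi a by split => //; rewrite pa.
have LHt : L_H L psi t by split => //; rewrite pt.
have ac1 : acc D0 a t by apply/HD0; case: (H0 a t) => _ /(_ (conj LHa (conj Lt pt))) [].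
have ac2 : acc D2 t b.
  apply/HD2; case: (H2 t b) => _ h; case: h => //; split => //; split => //.
  rewrite pt pa /=; case: (psi b) hxb hyb => x y z /= -> ->; rewrite /p2H /phiH /=; congr mkH; lia.
have ac3 : acc D2 a w0.
  apply/HD2; case: (H3 a w0) => _ h; case: h => //; split => //.
  split => //; split; first by case: W0.
  by rewrite pa; case: W0 => _ ->.
have [i [j [hi [hij [hj [c1 [c2 c3]]]]]]] :=
  pump3 ac1 ac2 ac3 (P := maxn (size b) (size w0)) (M := maxn (size a) (size t)) ltac:(lia).
rewrite (@cut_id _ i j b (ltnW hij)) in c2; last by lia.
rewrite (@cut_id _ i j w0 (ltnW hij)) in c3; last by lia.
set a' := cut i j a in c1 c3; set t' := cut i j t in c1 c2.
have r3 : R2 a' w0 by apply/HD2.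
have [[[La' _] [_ e3]] _] : restrR (R_theta L psi p2H) (is_w0 L psi) a' w0.
  by apply/H3; split => //.
have LHa' : L_H L psi a'.
  by case: (H3 a' w0) => /(_ (conj r3 W0)) [[]].
have [_ [Lt' e1]] : R_theta L psi phiH a' t' by apply/H0; split => //; apply/HD0.
have LHt' : L_H L psi t' by split => //; rewrite e1.
have [_ [_ e2]] : R_theta L psi p2H t' b by apply/H2; split => //; apply/HD2.
have ea : psi a' = psi a.
  rewrite pa; case: W0 => _ e0; move: e3 e2; rewrite e0 e1.
  case: LHa' => _; case: (psi a') => x y z /= /Z.eqb_eq /= hy [] hz ->.
  rewrite /p2H /phiH /=; congr mkH; lia.
have Ea : a' = a by apply: inj.
have Et : t' = t by apply: inj => //; rewrite e1 pt ea.
have := @cut_size_eq _ i j a hij; rewrite -/a' Ea => /(_ erefl) ?.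
have := @cut_size_eq _ i j t hij; rewrite -/t' Et => /(_ erefl); lia.
Qed.
Unset Implicit Arguments.

Lemma hx_bound u : (Z.abs (hx (Defs.pi u)) <= Z.of_nat (size u))%Z.
Proof.
elim: u => [|a u IH]; first by rewrite /Defs.pi /=; lia.
have ha : (Z.abs (hx (Defs.pi [:: a])) <= 1)%Z by case: a; rewrite /Defs.pi /hmul /=; lia.
change (a :: u) with ([:: a] ++ u); rewrite Defs.pi_cat size_cat.
have -> : forall g h, hx (hmul g h) = (hx g + hx h)%Z by [].
move: ha IH; set X := hx _; set Y := hx _; simpl size; lia.
Qed.

Lemma dA_lb w g : (Z.abs (hx g) <= Z.of_nat (size w) + Z.of_nat (dA (Defs.pi w) g))%Z.
Proof.
rewrite /dA /wlen; case: ex_minnP => m Hm _.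
move/existsP: Hm => [t /and3P [/Z.eqb_eq e1 _ _]].
have := hx_bound (w ++ t); rewrite Defs.pi_cat size_cat size_tuple /=.
move: e1; rewrite /hmul /hinv /=; lia.
Qed.

Lemma hfun_ge (L : pred (seq letter)) psi w n :
  L w -> size w <= n -> dA (Defs.pi w) (psi w) <= hfun L psi n.
Proof.
move=> Lw hs; rewrite /hfun.
have hs' : size w < n.+1 by [].
apply: leq_trans (leq_bigmax (Ordinal hs')).
exact: (leq_bigmax_cond (F := fun t : (size w).-tuple letter => dA (Defs.pi t) (psi t)) (P := fun t : (size w).-tuple letter => L t) (in_tuple w) Lw).
Qed.

Lemma seq_exp (L : pred (seq letter)) psi R0 R2 :
  cayley_automatic L psi -> FA_rec R0 -> FA_rec R2 ->
  (forall u v, restrL (L_H L psi) R0 u v <-> R_theta L psi phiH u v) ->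
  (forall u v, restrL (L_H L psi) R2 u v <-> R_theta L psi p2H u v) ->
  (forall u v, restrR R2 (is_w0 L psi) u v <-> restrR (R_theta L psi p2H) (is_w0 L psi) u v) ->
  exists C D, forall k, exists a, L a /\ psi a = mkH (Z.of_nat (2 ^ k)) 0 0 /\ size a <= C + k * D.
Proof.
move=> [_ [inj [surj _]]] F0 F2 H0 H2 H3.
have [w0 [Lw0 pw0]] := surj hone.
have W0 : is_w0 L psi w0 by split.
have [N1 B1] := bound_fwd inj F0 H0.
have [N2 B2] := bound_fwd inj F2 H2.
have [N3 B3] := bound_transfer inj F0 F2 H0 H2 H3 W0.
have [a0 [La0 pa0]] := surj (mkH 1 0 0).
exists (maxn (size a0) (size w0)), (N1 + N1 + N2 + N3).
elim=> [|k [a [La [pa sa]]]].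
  exists a0; split => //; split; [by rewrite pa0 | lia].
have [t1 [Lt1 pt1]] := surj (phiH (psi a)).
have [t2 [Lt2 pt2]] := surj (phiH (psi t1)).
have [b [Lb pb]] := surj (p2H (psi t2)).
have [a' [La' pa']] := surj (mkH (hz (psi b)) 0 0).
have [t' [Lt' pt']] := surj (phiH (psi a')).
have s1 := B1 a t1 (conj (conj La (ltac:(by rewrite pa) : inH (psi a))) (conj Lt1 pt1)).
have s2 := B1 t1 t2 (conj (conj Lt1 (ltac:(by rewrite pt1) : inH (psi t1))) (conj Lt2 pt2)).
have s3 := B2 t2 b (conj (conj Lt2 (ltac:(by rewrite pt2) : inH (psi t2))) (conj Lb pb)).
have s4 := B3 a' t' b Lb (ltac:(by rewrite pb) : hx (psi b) = 0%Z) (ltac:(by rewrite pb) : hy (psi b) = 0%Z) La' pa' Lt' pt'.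
exists a'; split => //; split; last by lia.
rewrite pa' pb pt2 pt1 pa /p2H /phiH /=; congr mkH.
rewrite expnS -multE Nat2Z.inj_mul; lia.
Qed.

Lemma exp_le_pow3 n : Rle (exp (INR n)) (INR (3 ^ n)).
Proof.
elim: n => [|n IH]; first by rewrite /= exp_0; apply: Rle_refl.
rewrite S_INR exp_plus expnS -multE mult_INR.
have e3 : Rle (exp 1) (INR 3) by apply: Rle_trans exp_le_3 _; simpl; lra.
rewrite Rmult_comm; apply: Rmult_le_compat => //.
- left; apply: exp_pos.
- left; apply: exp_pos.
Qed.

Lemma nat_bound C D n : C + 3 * D + 1 <= n -> 3 ^ n + (C + 3 * n * D) <= 2 ^ (3 * n).
Proof.
move=> hn.
have hA : n < 2 ^ n by apply: ltn_expl.
have h3 : 3 ^ n <= 2 ^ n * 2 ^ n.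
  rewrite -expnMn leq_exp2r //; lia.
have -> : 2 ^ (3 * n) = 2 ^ n * 2 ^ n * 2 ^ n by rewrite mulnC expnM !expnS expn0 muln1 mulnA.
set A := 2 ^ n in hA h3 *.
have hc : C + 3 * n * D <= n * n by nia.
nia.
Qed.

Lemma preceq_trans g h f : preceq g h -> preceq h f -> preceq g f.
Proof.
move=> [N1 [K1 [M1 [hK1 [hM1 H1]]]]] [N2 [K2 [M2 [hK2 [hM2 H2]]]]].
exists (maxn N1 N2), (K1 * K2), (M2 * M1); split; first by rewrite muln_gt0 hK1.
split; first by rewrite muln_gt0 hM2.
move=> n hn.
apply: Rle_trans (H1 n ltac:(lia)) _.
rewrite -mulnA (_ : K1 * K2 = Nat.mul K1 K2) // mult_INR Rmult_assoc.
apply: Rmult_le_compat_l; first exact: pos_INR.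
apply: H2; nia.
Qed.

Theorem mainTheorem12 :
  forall (L : pred (seq letter)) (psi : seq letter -> H3),
  cayley_automatic L psi ->
  forall R0 R1 R2 : seq letter -> seq letter -> Prop,
  FA_rec R0 -> FA_rec R1 -> FA_rec R2 ->
  (forall u v, restrL (L_H L psi) R0 u v <-> R_theta L psi phiH u v) ->
  (forall u v, restrR R1 (L_H1 L psi) u v <-> R_theta L psi p1H u v) ->
  (forall u v, restrL (L_H L psi) R2 u v <-> R_theta L psi p2H u v) ->
  (forall u v, restrR R2 (is_w0 L psi) u v <-> restrR (R_theta L psi p2H) (is_w0 L psi) u v) ->
  preceq expf (fun n => INR (hfun L psi n))
  /\ (forall f, inFF f -> prec f expf -> ~ preceq (fun n => INR (hfun L psi n)) f).
Proof.
move=> L psi CA R0 R1 R2 F0 F1 F2 H0 H1 H2 H3.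
have Hexp : preceq expf (fun n => INR (hfun L psi n)).
  have [C [D Hs]] := seq_exp L psi R0 R2 CA F0 F2 H0 H2 H3.
  exists (C + 3 * D + 1), 1, (C + 3 * D + 1); split => //; split; first lia.
  move=> n hn.
  have [a [La [pa sa]]] := Hs (3 * n).
  have hs : size a <= (C + 3 * D + 1) * n by nia.
  have hd := hfun_ge L psi a _ La hs.
  have hl := dA_lb a (psi a).
  have ex : hx (psi a) = Z.of_nat (2 ^ (3 * n)) by rewrite pa.
  have hb := nat_bound C D n hn.
  have h3 : 3 ^ n <= hfun L psi ((C + 3 * D + 1) * n).
    move: hl hd hb sa ex; set X := 2 ^ _; set Y := 3 ^ _; set W := dA _ _; set V := hfun _ _ _; set U := (3 * n * D); lia.
  have e1 : INR 1 = IZR 1 by reflexivity.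
  rewrite e1 Rmult_1_l /expf.
  apply: Rle_trans (exp_le_pow3 n) _; apply: le_INR; apply/leP; exact: h3.
split => // f _ [_ nf] hf; apply: nf; exact: preceq_trans Hexp hf.
Qed.
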